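(* Let $v_1,\dots,v_m\in\mathbb{C}^d$ with $m$ even, $\sum_{i=1}^m v_iv_i^*=\mathbb{I}$, $\|v_i\|^2=\alpha$ for all $i$, and $\alpha\le\frac{1}{221d}$. Run Algorithm 1 (described in the context) and fix an iteration $0\le j<m/2$. Suppose that for every $0\le j'\le j$ we have $u_{j'}-\lambda_{\max}(A_{j'})\ge 1/3$ and $\kappa(u_{j'}\mathbb{I}-A_{j'})\le 3/2$. Write $A=A_j$, $\mathcal{B}=\mathcal{B}_j$, $u=u_j$, $\widehat u=u_{j+1}$. Then \[ \sum_{v\in\mathcal{B}}\Big(\Phi^u(A)-\Phi^{\widehat u}(A+vv^* )\Big)\ge(m-j)\cdot\mathrm{tr}\Big[\log\big((u\mathbb{I}-A)^{-1}(\widehat u\mathbb{I}-A)\big)\Big]+\frac1\alpha\cdot\frac{m-j}{m}\cdot\mathrm{tr}\Big[\log\big(\mathbb{I}-\alpha(\widehat u\mathbb{I}-A)^{-1}\big)\Big]. \]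
   Context: For a Hermitian matrix $A$ and $u\in\mathbb{R}$ with $u\mathbb{I}-A$ positive definite, $\Phi^u(A)=\mathrm{tr}\log\big((u\mathbb{I}-A)^{-1}\big)=-\log\det(u\mathbb{I}-A)$, with $\log$ the matrix logarithm. Algorithm 1: set $A_0=\mathbf{0}_{d\times d}$, $\mathcal{A}_0=\emptyset$, $\mathcal{B}_0=\{v_1,\dots,v_m\}$, $u_0=1/2$, $\delta_u=\alpha/d$. For $j=0,\dots,m/2-1$: set $u_{j+1}=u_j+\delta_u$; choose $v_j\in\mathcal{B}_j$ maximising $\det(u_{j+1}\mathbb{I}-A_j-vv^* )$ over $v\in\mathcal{B}_j$ (ties arbitrary); set $A_{j+1}=A_j+v_jv_j^*$, $\mathcal{A}_{j+1}=\mathcal{A}_j\cup\{v_j\}$, $\mathcal{B}_{j+1}=\mathcal{B}_j\setminus\{v_j\}$. $\kappa(B)=\lambda_{\max}(B)/\lambda_{\min}(B)$ for Hermitian positive definite $B$. *)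

(* Defs.v *)
From HB Require Import structures.
From mathcomp Require Import all_boot all_order all_algebra.
From mathcomp Require Import all_classical all_reals all_analysis.
From mathcomp Require Import complex.
Set Implicit Arguments. Unset Strict Implicit. Unset Printing Implicit Defensive.
Import Order.TTheory GRing.Theory Num.Theory.
Local Open Scope ring_scope.
Local Open Scope classical_set_scope.

Definition cR (R : realType) (x : R) : R[i] := (x%:C)%C.

Definition hconj (R : realType) m n (A : 'M[R[i]]_(m, n)) : 'M[R[i]]_(n, m) :=
  (map_mx (@conjc R) A)^T.

(* tr log M for a matrix M with positive real spectrum (all uses below):
   tr log M = sum of log of eigenvalues = log det M. *)
Definition trlog (R : realType) d (M : 'M[R[i]]_d) : R :=
  ln (complex.Re (\det M)).

Definition Phi (R : realType) d (u : R) (A : 'M[R[i]]_d) : R :=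
  trlog (invmx ((cR u)%:M - A)).

(* extreme eigenvalues of a Hermitian matrix (whose eigenvalues are real) *)
Definition lambda_max (R : realType) d (B : 'M[R[i]]_d) : R :=
  sup [set complex.Re a | a in [set a : R[i] | eigenvalue B a]].
Definition lambda_min (R : realType) d (B : 'M[R[i]]_d) : R :=
  inf [set complex.Re a | a in [set a : R[i] | eigenvalue B a]].
Definition kappa (R : realType) d (B : 'M[R[i]]_d) : R :=
  lambda_max B / lambda_min B.

(* Algorithm 1.  A run is encoded by the sequence sigma of chosen indices:
   v_j of the paper is v (sigma j). *)
Definition u_alg (R : realType) (d : nat) (alpha : R) (j : nat) : R :=
  1 / 2 + j%:R * (alpha / d%:R).

Definition chosen m (sigma : nat -> 'I_m) (j : nat) : {set 'I_m} :=
  [set i | has (fun k => sigma k == i) (iota 0 j)].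

Definition B_alg m (sigma : nat -> 'I_m) (j : nat) : {set 'I_m} :=
  ~: chosen sigma j.

Definition A_alg (R : realType) d m (v : 'I_m -> 'cV[R[i]]_d)
    (sigma : nat -> 'I_m) (j : nat) : 'M[R[i]]_d :=
  \sum_(0 <= k < j) (v (sigma k) *m hconj (v (sigma k))).

(* sigma is a valid run of Algorithm 1 (ties broken arbitrarily) *)
Definition is_run (R : realType) d m (alpha : R) (v : 'I_m -> 'cV[R[i]]_d)
    (sigma : nat -> 'I_m) : Prop :=
  forall j : nat, (j < m %/ 2)%N ->
    sigma j \in B_alg sigma j /\
    forall i, i \in B_alg sigma j ->
      complex.Re (\det ((cR (u_alg d alpha j.+1))%:M - A_alg v sigma j
                         - v i *m hconj (v i)))
      <= complex.Re (\det ((cR (u_alg d alpha j.+1))%:M - A_alg v sigma j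
                         - v (sigma j) *m hconj (v (sigma j)))).

(* Main.v *)
Require Import Defs.
From HB Require Import structures.
From mathcomp Require Import all_boot all_order all_algebra.
From mathcomp Require Import all_classical all_reals all_analysis.
From mathcomp Require Import complex.
From mathcomp Require Import ring lra.
Import Order.TTheory GRing.Theory Num.Theory.
Local Open Scope ring_scope.

Lemma ln_prod (R : realType) n (F : 'I_n -> R) :
  (forall k, 0 < F k) -> ln (\prod_k F k) = \sum_k ln (F k).
Proof.
move=> Fp.
pose K := fun (x y : R) => 0 < x /\ ln x = y.
suff [] : K (\prod_k F k) (\sum_k ln (F k)) by [].
apply: (big_rec2 K); first by split; [exact: ltr01 | exact: ln1].
move=> k x y _ [xp <-]; split; first exact: mulr_gt0.
by rewrite lnM // posrE.
Qed.

Lemma jensen_ln (R : realType) n (p z : 'I_n -> R) :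
  (forall k, 0 <= p k) -> \sum_k p k = 1 -> (forall k, 0 < z k) ->
  \sum_k p k * ln (z k) <= ln (\sum_k p k * z k).
Proof.
move=> p0 p1 z0.
set S := \sum_k p k * z k.
have S0 : 0 < S.
  have Sge : 0 <= S by apply: sumr_ge0 => k _; rewrite mulr_ge0 // ltW.
  rewrite lt_neqAle Sge andbT; apply/negP => /eqP/esym /psumr_eq0P H.
  have : \sum_k p k = 0.
    have H' := H (fun k _ => mulr_ge0 (p0 k) (ltW (z0 k))).
    apply: big1 => k _; have := H' k isT.
    by move/eqP; rewrite mulf_eq0 (gt_eqF (z0 k)) orbF => /eqP.
  by rewrite p1 => /eqP; rewrite oner_eq0.
have step : forall k, ln (z k) <= ln S + (z k / S - 1).
  move=> k; rewrite -lerBlDl -ln_div ?posrE //.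
  have h := @le_ln1Dx _ (z k / S - 1).
  rewrite [1 + _]addrC subrK in h; apply: h.
  have : 0 < z k / S by rewrite divr_gt0.
  lra.
apply: (le_trans (y := \sum_k p k * (ln S + (z k / S - 1)))).
  by apply: ler_sum => k _; apply: ler_wpM2l.
under eq_bigr => k _ do rewrite mulrDr mulrBr mulr1 mulrA.
rewrite big_split /= -mulr_suml p1 mul1r sumrB -mulr_suml -/S divff ?gt_eqF //.
have := p1; lra.
Qed.

Lemma cheb (R : realType) n (r : 'I_n -> R) (f : R -> R) (ab bnd : R) :
  (forall k, r k <= bnd) -> ab <= bnd ->
  (forall x y, x <= y -> y <= bnd -> f y <= f x) ->
  \sum_k r k = n%:R * ab ->
  0 <= \sum_k (ab - r k) * f (r k).
Proof.
move=> rb abb fdec sr.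
have -> : \sum_k (ab - r k) * f (r k) =
   \sum_k (ab - r k) * (f (r k) - f ab) + f ab * \sum_k (ab - r k).
  rewrite mulr_sumr -big_split /=; apply: eq_bigr => k _; ring.
rewrite sumrB sumr_const card_ord sr mulr_natl subrr mulr0 addr0.
apply: sumr_ge0 => k _.
have [le|lt] := leP (r k) ab.
  by apply: mulr_ge0; rewrite subr_ge0 //; apply: fdec.
apply: mulr_le0; first by rewrite subr_le0 ltW.
by rewrite subr_le0; apply: fdec => //; apply: ltW.
Qed.

Lemma real_main (R : realType) d m j (B : {set 'I_m}) (r : 'I_d -> R)
  (y : 'I_m -> 'I_d -> R) (al u uh : R) :
  (0 < d)%N -> (j < m)%N -> 0 < al -> 3 * al < 1 ->
  m%:R * al = d%:R ->
  (forall k, r k <= u - 1/3) -> u <= uh ->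
  (forall i k, 0 <= y i k) -> (forall i, \sum_k y i k = al) ->
  (forall k, \sum_(i in B) y i k = 1 - r k) ->
  #|B| = (m - j)%N ->
  \sum_k r k = j%:R * al ->
  \sum_(i in B) (ln ((\prod_k (u - r k))^-1) -
       ln ((\prod_k (uh - r k) * (1 - \sum_k y i k / (uh - r k)))^-1))
  >= (m - j)%:R * ln ((\prod_k (u - r k))^-1 * \prod_k (uh - r k))
     + 1 / al * ((m - j)%:R / m%:R) *
       ln (\prod_k (uh - al - r k) / \prod_k (uh - r k)).
Proof.
move=> d0 jm al0 al3 mal rb uuh y0 ysum yB cB rsum.
have e0 : forall k, 1/3 <= uh - r k by move=> k; have := rb k; lra.
have eu : forall k, 0 < u - r k by move=> k; have := rb k; lra.
have ep : forall k, 0 < uh - r k by move=> k; have := e0 k; lra.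
have ea : forall k, 0 < uh - al - r k by move=> k; have := e0 k; lra.
set Pu := \prod_k (u - r k).
set PM := \prod_k (uh - r k).
set Pa := \prod_k (uh - al - r k).
have Pu0 : 0 < Pu by apply: prodr_gt0 => k _.
have PM0 : 0 < PM by apply: prodr_gt0 => k _.
have Pa0 : 0 < Pa by apply: prodr_gt0 => k _.
set x := fun i => \sum_k y i k / (uh - r k).
have x1 : forall i, 0 < 1 - x i.
  move=> i; suff : x i <= 3 * al by lra.
  rewrite -(ysum i) mulr_sumr; apply: ler_sum => k _.
  rewrite ler_pdivrMr //; have := e0 k; have := y0 i k; nra.
set c := fun k => ln ((uh - al - r k) / (uh - r k)).
have lnPa : ln (Pa / PM) = \sum_k c k.
  rewrite ln_div ?posrE // /Pa /PM !ln_prod // -sumrB.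
  by apply: eq_bigr => k _; rewrite /c ln_div ?posrE.
have jen : forall i, \sum_k (y i k / al) * c k <= ln (1 - x i).
  move=> i; have -> : 1 - x i = \sum_k (y i k / al) * ((uh - al - r k) / (uh - r k)).
    have -> : 1 - x i = \sum_k (y i k / al - y i k / (uh - r k)).
      by rewrite sumrB -mulr_suml ysum divff // gt_eqF.
    apply: eq_bigr => k _; field.
    by rewrite (gt_eqF al0) (gt_eqF (ep k)).
  apply: jensen_ln.
  - by move=> k; rewrite divr_ge0 // ltW.
  - by rewrite -mulr_suml ysum divff // gt_eqF.
  - by move=> k; rewrite divr_gt0.
have LHS : \sum_(i in B) (ln Pu^-1 - ln (PM * (1 - x i))^-1)
    = (m - j)%:R * (ln PM - ln Pu) + \sum_(i in B) ln (1 - x i).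
  rewrite -cB mulr_natl -sumr_const -big_split /=; apply: eq_bigr => i _.
  rewrite !lnV ?posrE ?mulr_gt0 // lnM ?posrE //; ring.
rewrite LHS lnPa lnM ?posrE ?invr_gt0 // lnV ?posrE //.
suff : 1 / al * ((m - j)%:R / m%:R) * \sum_k c k <= \sum_(i in B) ln (1 - x i).
  lra.
apply: (le_trans (y := \sum_(i in B) \sum_k (y i k / al) * c k)); last first.
  by apply: ler_sum => i _; apply: jen.
rewrite exchange_big /=.
have -> : \sum_k \sum_(i in B) y i k / al * c k = 1 / al * \sum_k (1 - r k) * c k.
  rewrite mulr_sumr; apply: eq_bigr => k _.
  by rewrite -mulr_suml -mulr_suml yB; field; rewrite gt_eqF.
rewrite -mulrA ler_pM2l ?divr_gt0 //.
have m0 : (0 < m)%N by apply: leq_ltn_trans jm.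
have m0' : 0 < m%:R :> R by rewrite ltr0n.
set ab := j%:R / m%:R : R.
have ch : 0 <= \sum_k (ab - r k) * c k.
  apply: (@cheb R d r (fun t => ln ((uh - al - t) / (uh - t))) ab (u - 1/3)) => //.
  - have h : \sum_k r k <= \sum_(k < d) (u - 1/3) by apply: ler_sum => k _.
    rewrite sumr_const card_ord -[_ *+ d]mulr_natl rsum -mal in h.
    rewrite /ab ler_pdivrMr //; nra.
  - move=> s t st tb.
    have ht : 0 < uh - al - t by lra.
    have hs : 0 < uh - al - s by lra.
    rewrite ler_ln ?posrE ?divr_gt0 //; try lra.
    rewrite ler_pdivrMr; last lra.
    rewrite mulrAC ler_pdivlMr; last lra.
    nra.
  - by rewrite rsum -mal /ab; field; rewrite gt_eqF.
have hmj : (m - j)%:R / m%:R = 1 - ab :> R.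
  by rewrite natrB ?(ltnW jm) // mulrBl divff ?gt_eqF.
rewrite hmj.
set Sc := \sum_k c k; set Src := \sum_k r k * c k.
have e1 : \sum_k (ab - r k) * c k = ab * Sc - Src.
  by rewrite /Sc /Src mulr_sumr -sumrB; apply: eq_bigr => k _; ring.
have e2 : \sum_k (1 - r k) * c k = Sc - Src.
  by rewrite /Sc /Src -sumrB; apply: eq_bigr => k _; ring.
rewrite e2; rewrite e1 in ch.
lra.
Qed.

Local Open Scope sesquilinear_scope.

Lemma sylvester (C : comUnitRingType) n (a : 'cV[C]_n) (b : 'rV[C]_n) :
  \det (1%:M - a *m b) = 1 - (b *m a) 0 0.
Proof.
have e1 : block_mx (1%:M : 'M[C]_1) b a 1%:M =
   block_mx 1%:M 0 a 1%:M *m block_mx 1%:M b 0 (1%:M - a *m b).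
  rewrite mulmx_block !(mul1mx, mulmx1, mul0mx, mulmx0, addr0, add0r).
  by rewrite addrC subrK.
have e2 : block_mx (1%:M : 'M[C]_1) b a 1%:M =
   block_mx (1%:M - b *m a) b 0 1%:M *m block_mx 1%:M 0 a 1%:M.
  rewrite mulmx_block !(mul1mx, mulmx1, mul0mx, mulmx0, addr0, add0r).
  by rewrite subrK.
have := congr1 determinant e1; rewrite e2 !det_mulmx (det_lblock (1%:M : 'M[C]_1) a).
rewrite !det_ublock !det1 !mul1r !mulr1 => <-.
by rewrite det_mx11 !mxE.
Qed.

Lemma hconjE (R : realType) p q (X : 'M[R[i]]_(p, q)) : hconj X = X^t*.
Proof. by rewrite /hconj map_trmx. Qed.

Section Spec.
Variable R : realType.
Variable d : nat.
Variable A : 'M[R[i]]_d.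
Hypothesis Aherm : A^t* = A.

Let P := spectralmx A.
Let s := spectral_diag A.

Lemma PPt : P *m P^t* = 1%:M.
Proof. exact/unitarymxP/spectral_unitarymx. Qed.

Lemma PtP : P^t* *m P = 1%:M.
Proof. by rewrite -invmx_unitary ?spectral_unitarymx // mulVmx ?spectral_unit. Qed.

Lemma AE : A = P^t* *m diag_mx s *m P.
Proof.
have An : A \is normalmx by apply/normalmxP; rewrite Aherm.
by rewrite -invmx_unitary ?spectral_unitarymx //; apply/orthomx_spectralP.
Qed.

Lemma sreal k : s 0 k = cR (complex.Re (s 0 k)).
Proof.
have Ah : A \is hermsymmx by apply/is_hermitianmxP; rewrite expr0 scale1r Aherm.
have /mxOverP/(_ 0 k) := hermitian_spectral_diag_real Ah.
by case/complex_realP => x ->.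
Qed.

Definition rr k := complex.Re (s 0 k).

Lemma conjP (X : 'M[R[i]]_d) : \det (P^t* *m X *m P) = \det X.
Proof. by rewrite !det_mulmx mulrAC -det_mulmx PtP det1 mul1r. Qed.

Lemma scal_conj (c : R[i]) : P^t* *m c%:M *m P = c%:M.
Proof. by rewrite mul_mx_scalar -scalemxAl PtP scalemx1. Qed.

Lemma diag_shift (c : R[i]) :
  c%:M - diag_mx s = diag_mx (\row_k (c - s 0 k)).
Proof.
apply/matrixP => i j; rewrite !mxE; case: eqP => [->|_]; by rewrite ?mulr1n ?mulr0n ?subr0.
Qed.

Lemma det_shift (c : R[i]) : \det (c%:M - A) = \prod_k (c - cR (rr k)).
Proof.
have -> : c%:M - A = P^t* *m (c%:M - diag_mx s) *m P.
  by rewrite mulmxBr mulmxBl scal_conj -AE.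
rewrite conjP diag_shift det_diag; apply: eq_bigr => k _.
by rewrite mxE /rr -sreal.
Qed.

Lemma tr_A : \tr A = \sum_k cR (rr k).
Proof.
rewrite {1}AE mxtrace_mulC mulmxA PPt mul1mx mxtrace_diag.
by apply: eq_bigr => k _; rewrite /rr -sreal.
Qed.

Lemma eig1 k : eigenvalue A (cR (rr k)).
Proof.
apply/eigenvalueP; exists (delta_mx 0 k *m P).
  rewrite {1}AE !mulmxA -(mulmxA _ P) PPt mulmx1.
  have -> : delta_mx 0 k *m diag_mx s = s 0 k *: (delta_mx 0 k : 'rV_d).
    apply/rowP => j; rewrite mul_mx_diag !mxE eqxx /=.
    by case: eqP => [->|_]; rewrite ?mulr1 ?mul1r ?mulr0 ?mul0r.
  by rewrite -scalemxAl /rr -sreal.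
apply/negP => /eqP h.
have := congr1 (fun X => X *m P^t*) h; rewrite /= mul0mx -mulmxA PPt mulmx1.
move=> /rowP /(_ k); rewrite !mxE !eqxx /=.
by move/eqP; rewrite oner_eq0.
Qed.

Lemma eig2 a : eigenvalue A a -> exists k, a = cR (rr k).
Proof.
case/eigenvalueP => x xA x0.
set y := x *m P^t*.
have yD : y *m diag_mx s = a *: y.
  have : x *m A *m P^t* = a *: y by rewrite xA -scalemxAl.
  by rewrite AE !mulmxA -(mulmxA _ P) PPt mulmx1 -/y.
have y0 : y != 0.
  apply: contra x0 => /eqP y0.
  by rewrite -[x]mulmx1 -PtP mulmxA -/y y0 mul0mx.
have [l yl] : exists l, y 0 l != 0.
  apply/existsP; apply: contraR y0 => /existsPn h.
  by apply/eqP/matrixP => i j; rewrite ord1 (eqP (negbNE (h j))) mxE.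
exists l; rewrite /rr -sreal.
have /matrixP /(_ 0 l) := yD; rewrite mul_mx_diag mxE [(a *: y) 0 l]mxE => h.
by apply: (mulIf yl); rewrite -h mulrC.
Qed.


Lemma tr_mulP (v : 'cV[R[i]]_d) : (P *m v)^t* = v^t* *m P^t*.
Proof. by rewrite trmx_mul map_mxM. Qed.

Lemma wnorm (v : 'cV[R[i]]_d) : (P *m v)^t* *m (P *m v) = v^t* *m v.
Proof. by rewrite tr_mulP mulmxA -(mulmxA _ _ P) PtP mulmx1. Qed.

Lemma wouter (v : 'cV[R[i]]_d) :
  (P *m v) *m (P *m v)^t* = P *m (v *m v^t*) *m P^t*.
Proof. by rewrite tr_mulP !mulmxA. Qed.

Lemma diag_back : P *m A *m P^t* = diag_mx s.
Proof. by rewrite AE !mulmxA PPt mul1mx -mulmxA PPt mulmx1. Qed.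

Lemma det_rank1 (c : R[i]) (v : 'cV_d) : (forall k, c - cR (rr k) != 0) ->
  \det (c%:M - (A + v *m v^t*)) =
  (\prod_k (c - cR (rr k))) *
  (1 - \sum_k ((P *m v)^t*) 0 k * ((c - cR (rr k))^-1 * (P *m v) k 0)).
Proof.
move=> ne.
set w := P *m v.
set e := \row_k (c - s 0 k).
set e' := \row_k (c - s 0 k)^-1.
have -> : c%:M - (A + v *m v^t*) = P^t* *m (diag_mx e - w *m w^t*) *m P.
  rewrite mulmxBr mulmxBl /e -diag_shift mulmxBr mulmxBl scal_conj -AE.
  rewrite /w wouter !mulmxA PtP mul1mx -!mulmxA PtP mulmx1.
  by rewrite opprD addrA.
rewrite conjP.
have ee : diag_mx e *m diag_mx e' = 1%:M.
  apply/matrixP => i j; rewrite mul_diag_mx !mxE.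
  case: eqP => [->|_]; rewrite ?mulr1n ?mulr0n ?mulr0 //.
  by rewrite divff // sreal; apply: ne.
have -> : diag_mx e - w *m w^t* = diag_mx e *m (1%:M - (diag_mx e' *m w) *m w^t*).
  by rewrite mulmxBr mulmx1 !mulmxA ee mul1mx.
rewrite det_mulmx sylvester det_diag.
congr (_ * (1 - _)).
  by apply: eq_bigr => k _; rewrite mxE /rr -sreal.
rewrite mxE; apply: eq_bigr => k _; rewrite mul_diag_mx mxE.
rewrite [X in _ * X]mxE [X in _ * (X * _)]mxE /rr -sreal.
by [].
Qed.

End Spec.

Lemma Re_sum (R : realType) (I : Type) (r : seq I) (P : pred I) (F : I -> R[i]) :
  complex.Re (\sum_(i <- r | P i) F i) = \sum_(i <- r | P i) complex.Re (F i).
Proof.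
apply: (big_rec2 (fun x y => complex.Re x = y)) => // i y1 y2 _ <-.
by case: (F i) => a b; case: y1.
Qed.

Lemma Re_cR (R : realType) (x : R) : complex.Re (cR x) = x.
Proof. by []. Qed.

Lemma cR_inj (R : realType) (x y : R) : cR x = cR y -> x = y.
Proof. by case. Qed.

Lemma conj_mul (R : realType) (z : R[i]) :
  (conjc z) * z = cR (complex.Re (conjc z * z)) /\ 0 <= complex.Re (conjc z * z).
Proof.
case: z => a b; rewrite /cR /=; split.
  by apply/eqP; rewrite eq_complex /=; apply/andP; split; apply/eqP; ring.
nra.
Qed.

Lemma hconj_herm (R : realType) d (w : 'cV[R[i]]_d) :
  hconj (w *m hconj w) = w *m hconj w.
Proof.
by rewrite !hconjE trmx_mul map_mxM trmxCK.
Qed.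

Lemma chosenE m (sigma : nat -> 'I_m) j i :
  (i \in chosen sigma j) = (i \in map sigma (iota 0 j)).
Proof.
rewrite inE; apply/hasP/mapP => [[k kin /eqP <-]|[k kin ->]]; by exists k.
Qed.

Lemma run_uniq (R : realType) d m (alpha : R) (v : 'I_m -> 'cV[R[i]]_d) sigma j :
  is_run alpha v sigma -> (j <= m %/ 2)%N -> uniq (map sigma (iota 0 j)).
Proof.
move=> hrun; elim: j => [|j IH] hj //.
rewrite -addn1 iotaD map_cat cat_uniq IH ?(leq_trans (leqnSn j)) //=.
rewrite orbF andbT add0n.
have [hin _] := hrun j hj.
move: hin; rewrite finset.in_setC chosenE => ->.
by [].
Qed.

Lemma tconj_entry (R : realType) d (w : 'cV[R[i]]_d) k :
  (w^t*) 0 k = conjc (w k 0).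
Proof. by rewrite !mxE. Qed.

Theorem lemma3p5 (R : realType) (d m : nat) (alpha : R)
    (v : 'I_m -> 'cV[R[i]]_d) (sigma : nat -> 'I_m) (j : nat) :
  (0 < d)%N ->
  ~~ odd m ->
  \sum_(i < m) (v i *m hconj (v i)) = 1%:M ->
  (forall i, (hconj (v i) *m v i) 0 0 = cR alpha) ->
  alpha <= 1 / (221 * d%:R) ->
  is_run alpha v sigma ->
  (j < m %/ 2)%N ->
  (forall j', (j' <= j)%N ->
     u_alg d alpha j' - lambda_max (A_alg v sigma j') >= 1 / 3 /\
     kappa ((cR (u_alg d alpha j'))%:M - A_alg v sigma j') <= 3 / 2) ->
  let A := A_alg v sigma j in
  let u := u_alg d alpha j in
  let uh := u_alg d alpha j.+1 in
  \sum_(i in B_alg sigma j) (Phi u A - Phi uh (A + v i *m hconj (v i)))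
  >= (m - j)%:R * trlog (invmx ((cR u)%:M - A) *m ((cR uh)%:M - A))
     + 1 / alpha * ((m - j)%:R / m%:R)
       * trlog (1%:M - cR alpha *: invmx ((cR uh)%:M - A)).
Proof.
move=> d0 hm hsum hnorm halpha hrun hj hlam.
cbv zeta.
set A := A_alg v sigma j.
set u := u_alg d alpha j.
set uh := u_alg d alpha j.+1.
have hj' : (j <= m %/ 2)%N := ltnW hj.
have jm : (j < m)%N by apply: (leq_trans hj); rewrite leq_div.
have us := run_uniq _ _ _ _ _ _ _ hrun hj'.
have cardC : #|chosen sigma j| = j.
  rewrite (eq_card (chosenE _ sigma j)).
  by move/card_uniqP: us; rewrite size_map size_iota.
have cB : #|B_alg sigma j| = (m - j)%N.
  have h := cardsC (chosen sigma j); rewrite card_ord cardC in h.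
  by apply/eqP; rewrite /B_alg -(eqn_add2l j) subnKC ?(ltnW jm) // h.
have AE : A = \sum_(i in chosen sigma j) v i *m hconj (v i).
  rewrite /A /A_alg /index_iota subn0.
  rewrite -(big_map sigma xpredT (fun i => v i *m hconj (v i))) big_uniq //.
  by apply: eq_bigl => i; rewrite chosenE.
have hB : \sum_(i in B_alg sigma j) v i *m hconj (v i) = 1%:M - A.
  rewrite -hsum [in RHS](bigID (fun i => i \in chosen sigma j)) /= AE.
  rewrite [X in _ = X - _]addrC addrK.
  by apply: eq_bigl => i; rewrite finset.in_setC.
have Aherm : A^t* = A.
  rewrite {1}AE raddf_sum map_mx_sum AE; apply: eq_bigr => i _.
  by rewrite -hconjE hconj_herm.
set r := rr R d A.
set P := spectralmx A.
have rb : forall k, r k <= u - 1/3.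
  move=> k; have [h1 _] := hlam j (leqnn j).
  suff : r k <= lambda_max A by rewrite -/A -/u in h1; lra.
  rewrite /lambda_max.
  have hin : [set complex.Re a | a in [set a : R[i] | eigenvalue A a]]%classic (r k).
    by exists (cR (r k)) => //; apply: (eig1 _ _ _ Aherm).
  apply: sup_upper_bound => //; split; first by exists (r k).
  exists (\sum_l `|r l|) => z [a ea <-].
  have [l ->] := eig2 _ _ _ Aherm a ea.
  rewrite Re_cR; apply: le_trans (ler_norm _) _.
  by rewrite (bigD1 l) //= lerDl sumr_ge0.
have mal : m%:R * alpha = d%:R.
  have := congr1 mxtrace hsum; rewrite mxtrace1 raddf_sum /=.
  under eq_bigr => i _ do rewrite mxtrace_mulC /mxtrace big_ord1 hnorm.
  rewrite sumr_const card_ord -rmorphMn -(rmorph_nat (real_complex R)) => /cR_inj.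
  by rewrite mulr_natl.
have rsum : \sum_k r k = j%:R * alpha.
  have := tr_A _ _ _ Aherm; rewrite {1}AE raddf_sum /=.
  under eq_bigr => i _ do rewrite mxtrace_mulC /mxtrace big_ord1 hnorm.
  rewrite sumr_const cardC -rmorphMn -rmorph_sum => /cR_inj <-.
  by rewrite mulr_natl.
have al0 : 0 < alpha.
  have hd : 0 < d%:R :> R by rewrite ltr0n.
  have hm0 : 0 <= m%:R :> R by rewrite ler0n.
  rewrite -mal in hd; nra.
have al3 : 3 * alpha < 1.
  have hd : 1 <= d%:R :> R by rewrite ler1n.
  move: halpha; rewrite ler_pdivlMr ?mulr_gt0 ?ltr0n // => h; nra.
have uuh : u <= uh.
  rewrite /u /uh /u_alg -natr1.
  have : 0 <= alpha / d%:R by rewrite divr_ge0 ?ler0n // ltW.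
  lra.
set y := fun i k => complex.Re (((P *m v i)^t*) 0 k * (P *m v i) k 0).
have qE : forall i k, ((P *m v i)^t*) 0 k * (P *m v i) k 0 = cR (y i k).
  by move=> i k; rewrite tconj_entry /y tconj_entry; case: (conj_mul _ ((P *m v i) k 0)).
have y0 : forall i k, 0 <= y i k.
  by move=> i k; rewrite /y tconj_entry; case: (conj_mul _ ((P *m v i) k 0)).
have ysum : forall i, \sum_k y i k = alpha.
  move=> i; have h : \sum_k ((P *m v i)^t*) 0 k * (P *m v i) k 0 = cR alpha.
    by rewrite -(hnorm i) hconjE -(wnorm _ _ A (v i)) [RHS]mxE.
  by rewrite /y -Re_sum h.
have yB : forall k, \sum_(i in B_alg sigma j) y i k = 1 - r k.
  move=> k.
  have hw : \sum_(i in B_alg sigma j) (P *m v i) *m (P *m v i)^t* = 1%:M - diag_mx (spectral_diag A).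
    under eq_bigr => i _ do rewrite wouter.
    rewrite -mulmx_suml -mulmx_sumr.
    under eq_bigr => i _ do rewrite -hconjE.
    by rewrite hB mulmxBr mulmx1 mulmxBl PPt diag_back.
  have := congr1 (fun X : 'M[R[i]]_d => X k k) hw; rewrite /= summxE diag_shift mxE eqxx mulr1n mxE.
  have e : forall i, ((P *m v i) *m (P *m v i)^t*) k k = cR (y i k).
    by move=> i; rewrite mxE big_ord1 mulrC qE.
  rewrite (eq_bigr _ (fun i _ => e i)).
  rewrite sreal // -rmorph_sum -(rmorph1 (real_complex R)) -rmorphB => /cR_inj ->.
  by [].
have hdet : forall c, \det ((cR c)%:M - A) = cR (\prod_k (c - r k)).
  move=> c; rewrite (det_shift _ _ _ Aherm) /cR rmorph_prod; apply: eq_bigr => k _.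
  by rewrite rmorphB.
have ep : forall k, 0 < uh - r k by move=> k; have := rb k; lra.
have PM0 : 0 < \prod_k (uh - r k) by apply: prodr_gt0 => k _.
have PhiA : Phi u A = ln ((\prod_k (u - r k))^-1).
  by rewrite /Phi /trlog det_inv hdet /cR -fmorphV.
have PhiAv : forall i, Phi uh (A + v i *m hconj (v i)) =
    ln ((\prod_k (uh - r k) * (1 - \sum_k y i k / (uh - r k)))^-1).
  move=> i; rewrite /Phi /trlog det_inv hconjE (det_rank1 _ _ _ Aherm); last first.
    by move=> k; rewrite /cR -rmorphB fmorph_eq0 gt_eqF.
  suff -> : \prod_k (cR uh - cR (r k)) * (1 - \sum_k ((P *m v i)^t*) 0 k *
       ((cR uh - cR (r k))^-1 * (P *m v i) k 0)) =
       cR (\prod_k (uh - r k) * (1 - \sum_k y i k / (uh - r k))).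
    by rewrite /cR -fmorphV.
  rewrite /cR rmorphM rmorphB rmorph1 rmorph_sum rmorph_prod; congr (_ * (1 - _)).
    by apply: eq_bigr => k _; rewrite rmorphB.
  apply: eq_bigr => k _.
  by rewrite mulrCA qE /cR -rmorphB -fmorphV -rmorphM mulrC.
have T1 : trlog (invmx ((cR u)%:M - A) *m ((cR uh)%:M - A)) =
    ln ((\prod_k (u - r k))^-1 * \prod_k (uh - r k)).
  by rewrite /trlog det_mulmx det_inv !hdet /cR -fmorphV -rmorphM.
have Mu : (cR uh)%:M - A \in unitmx.
  by rewrite unitmxE hdet unitfE /cR fmorph_eq0 gt_eqF.
have T2 : trlog (1%:M - cR alpha *: invmx ((cR uh)%:M - A)) =
    ln (\prod_k (uh - alpha - r k) / \prod_k (uh - r k)).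
  have -> : 1%:M - cR alpha *: invmx ((cR uh)%:M - A) =
      ((cR (uh - alpha))%:M - A) *m invmx ((cR uh)%:M - A).
    rewrite /cR rmorphB raddfB /= addrAC mulmxBl mulmxV // mul_scalar_mx.
    by [].
  by rewrite /trlog det_mulmx det_inv !hdet /cR -fmorphV -rmorphM.
rewrite T1 T2.
rewrite (eq_bigr (fun i => ln ((\prod_k (u - r k))^-1) -
    ln ((\prod_k (uh - r k) * (1 - \sum_k y i k / (uh - r k)))^-1))); last first.
  by move=> i _; rewrite PhiA PhiAv.
apply: real_main => //.
Qed.
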